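(* Let $d$ be an integer and $x$ a real number with $0<d\leqslant x/2$, and let $K_d$ be the largest integer $k$ such that $(k-d)k\leqslant dx$ (i.e. $K_d=\lfloor (d+\sqrt{d^2+4dx})/2\rfloor$). Then for every integer $k$ with $K_d-d<k\leqslant K_d$, $$d\lfloor x/k \rfloor +\frac{x}{\lfloor x/k \rfloor}=2\sqrt{dx}+O\bigl(d^{3/2}x^{-1/2}\bigr),$$ with an absolute implied constant.
   Context: $\lfloor t\rfloor$ denotes the integer part of the real number $t$. *)

(* Defs.v *)
From Stdlib Require Export Reals ZArith.
Open Scope R_scope.

(* Integer part (floor) of a real number: the unique integer n with
   n <= t < n + 1.  Stdlib's [up t] is the unique integer with
   t < up t <= t + 1, so [up t - 1] is the floor. *)
Definition floorR (t : R) : Z := (up t - 1)%Z.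

(* Main.v *)
Require Import Defs.
From Stdlib Require Import Reals ZArith Lra Lia Psatz.
Open Scope R_scope.

Theorem proposition5 :
  exists C : R, 0 < C /\
  forall (d : Z) (x : R),
    (0 < d)%Z -> IZR d <= x / 2 ->
    forall K : Z,
      IZR (K - d) * IZR K <= IZR d * x ->
      (forall k' : Z, IZR (k' - d) * IZR k' <= IZR d * x -> (k' <= K)%Z) ->
      forall k : Z, (K - d < k)%Z -> (k <= K)%Z ->
        Rabs (IZR d * IZR (floorR (x / IZR k))
              + x / IZR (floorR (x / IZR k))
              - 2 * sqrt (IZR d * x))
        <= C * (IZR d * sqrt (IZR d) / sqrt x).
Proof.
  exists 100. split; [lra|].
  intros d x Hd Hdx K HK Hmax k Hk1 Hk2.
  assert (HD : 1 <= IZR d) by (apply IZR_le; lia).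
  assert (HKd : (d <= K)%Z).
  { apply Hmax. rewrite Z.sub_diag. simpl. nra. }
  assert (HK1 : IZR (K + 1 - d) * IZR (K + 1) > IZR d * x).
  { destruct (Rle_lt_dec (IZR (K + 1 - d) * IZR (K + 1)) (IZR d * x)) as [r|r].
    - apply Hmax in r. lia.
    - exact r. }
  assert (Hkl : IZR (K - d + 1) <= IZR k) by (apply IZR_le; lia).
  assert (Hku : IZR k <= IZR K) by (apply IZR_le; lia).
  assert (HKdr : IZR d <= IZR K) by (apply IZR_le; lia).
  rewrite minus_IZR in HK. rewrite minus_IZR, !plus_IZR in HK1.
  rewrite plus_IZR, minus_IZR in Hkl.
  set (D := IZR d) in *. set (Kr := IZR K) in *. set (kr := IZR k) in *.
  assert (Hx : 0 < x) by lra.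
  assert (HKx : Kr <= x).
  { destruct (Rle_lt_dec Kr x) as [r|r]; [exact r|].
    exfalso. assert ((Kr - x) * (Kr + x - D) > 0).
    { apply Rmult_lt_0_compat; lra. }
    nra. }
  set (s := sqrt (D * x)).
  assert (Hs2 : s * s = D * x) by (apply sqrt_sqrt; nra).
  assert (Hs0 : 0 <= s) by apply sqrt_pos.
  assert (Hs2D : s * s >= 2 * D * D) by nra.
  assert (HDs : D <= s) by nra.
  assert (Hs43 : 3 * s >= 4 * D) by nra.
  assert (Hspos : 0 < s) by lra.
  assert (HKs : Kr <= s + D).
  { destruct (Rle_lt_dec Kr (s + D)) as [r|r]; [exact r|].
    exfalso. assert ((Kr - D) * Kr > s * s).
    { apply Rmult_gt_0_lt_compat; lra. }
    lra. }
  assert (HK1s : Kr + 1 > s).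
  { destruct (Rle_lt_dec (Kr + 1) s) as [r|r]; [|lra].
    exfalso. assert ((Kr + 1 - D) * (Kr + 1) <= s * s).
    { apply Rmult_le_compat; lra. }
    lra. }
  assert (Hkr0 : 0 < kr) by lra.
  assert (Hkrs : kr > s / 4) by lra.
  assert (Hkr2s : kr <= 2 * s) by lra.
  set (t := x / kr) in *.
  assert (Ht1 : 1 <= t).
  { unfold t. apply (Rmult_le_reg_r kr); [lra|]. field_simplify; lra. }
  assert (Htk : t * kr = x) by (unfold t; field; lra).
  unfold floorR.
  destruct (archimed t) as [Hu1 Hu2].
  rewrite minus_IZR.
  set (Q := IZR (up t) - IZR 1).
  assert (HQ1 : Q <= t) by (unfold Q; simpl; lra).
  assert (HQ2 : t < Q + 1) by (unfold Q; simpl; lra).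
  assert (HQpos : 1 <= Q).
  { unfold Q. simpl. assert (1 < up t)%Z by (apply lt_IZR; simpl; lra).
    assert (IZR 2 <= IZR (up t)) by (apply IZR_le; lia). simpl in *. lra. }
  set (E := D * Q).
  assert (HEpos : 0 < E) by (unfold E; apply Rmult_lt_0_compat; lra).
  assert (HE1 : E * kr <= s * s).
  { rewrite Hs2. unfold E. rewrite Rmult_assoc. apply Rmult_le_compat_l; [lra|].
    rewrite <- Htk. apply Rmult_le_compat_r; lra. }
  assert (HE2 : E * kr > s * s - D * kr).
  { rewrite Hs2. unfold E.
    assert (Q * kr + kr > t * kr) by (rewrite <- Rmult_1_l with (r := kr) at 2; rewrite <- Rmult_plus_distr_r; apply Rmult_lt_compat_r; lra).
    assert (D * (Q * kr) > D * (x - kr)) by (apply Rmult_lt_compat_l; lra).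
    rewrite Rmult_assoc. lra. }
  assert (HE3 : 2 * (E * kr) >= s * s).
  { rewrite Hs2. unfold E.
    assert (2 * Q * kr > t * kr) by (apply Rmult_lt_compat_r; lra).
    assert (D * (2 * Q * kr) >= D * x) by (apply Rmult_ge_compat_l; lra).
    replace (2 * (D * Q * kr)) with (D * (2 * Q * kr)) by ring. lra. }
  assert (HEs : E >= s / 4).
  { assert (E * kr <= E * (2 * s)) by (apply Rmult_le_compat_l; lra).
    destruct (Rle_lt_dec (s / 4) E) as [r|r]; [lra|].
    exfalso. assert ((s / 4 - E) * (4 * s) > 0) by (apply Rmult_lt_0_compat; lra). lra. }
  assert (HEu : E - s < 4 * D).
  { destruct (Rle_lt_dec (4 * D) (E - s)) as [r|r]; [|lra].
    exfalso. assert (s * (s - kr) < s * D) by (apply Rmult_lt_compat_l; lra).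
    assert ((E - s) * kr >= 4 * D * kr) by (apply Rmult_ge_compat_r; lra).
    assert (D * kr > D * (s / 4)) by (apply Rmult_lt_compat_l; lra).
    lra. }
  assert (HEl : s - E < 5 * D).
  { destruct (Rle_lt_dec (5 * D) (s - E)) as [r|r]; [|lra].
    exfalso. assert (s * (kr - s) <= s * D) by (apply Rmult_le_compat_l; lra).
    assert ((s - E) * kr >= 5 * D * kr) by (apply Rmult_ge_compat_r; lra).
    assert (D * kr > D * (s / 4)) by (apply Rmult_lt_compat_l; lra).
    lra. }
  assert (Hsq : D * sqrt D / sqrt x = D * D / s).
  { unfold s. rewrite sqrt_mult by lra.
    assert (0 < sqrt D) by (apply sqrt_lt_R0; lra).
    assert (0 < sqrt x) by (apply sqrt_lt_R0; lra).
    assert (sqrt D * sqrt D = D) by (apply sqrt_sqrt; lra).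
    replace (D * D) with (D * sqrt D * sqrt D) by (rewrite Rmult_assoc, H1; ring).
    field. lra. }
  rewrite Hsq.
  fold Q. fold E.
  assert (Hid : E + x / Q - 2 * s = (E - s) * (E - s) / E).
  { replace x with (s * s / D) by (rewrite Hs2; field; lra).
    unfold E. field. split; lra. }
  rewrite Hid.
  assert (Hsq2 : (E - s) * (E - s) <= 25 * (D * D)).
  { assert (0 < (5 * D - (E - s)) * (5 * D + (E - s))) by (apply Rmult_lt_0_compat; lra).
    lra. }
  rewrite Rabs_pos_eq.
  2: { apply Rmult_le_pos; [pose proof (Rle_0_sqr (E - s)) as Hq; unfold Rsqr in Hq; lra|]. left; apply Rinv_0_lt_compat; lra. }
  apply (Rmult_le_reg_r (E * s)); [apply Rmult_lt_0_compat; lra|].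
  replace ((E - s) * (E - s) / E * (E * s)) with ((E - s) * (E - s) * s) by (field; lra).
  replace (100 * (D * D / s) * (E * s)) with (100 * (D * D) * E) by (field; lra).
  assert ((E - s) * (E - s) * s <= 25 * (D * D) * s) by (apply Rmult_le_compat_r; lra).
  assert (25 * (D * D) * s <= 25 * (D * D) * (4 * E)) by (apply Rmult_le_compat_l; [assert (0 <= D * D) by (apply Rmult_le_pos; lra); lra | lra]).
  lra.
Qed.
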